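(* For any RES-graph $(G,\gamma,b)$, the maximum number of non-zero circuits in a flooding of $(G,\gamma,b)$ equals $\tilde{\nu}(G,\gamma,b)$.
   Context: Graphs are finite and may have loops and multiple edges. Each edge consists of two half-edges; each half-edge is incident to a vertex, and a loop contributes $2$ to the degree of its vertex. An arc is an ordered pair $(h_1,h_2)$ of half-edges forming an edge; its tail is the vertex of $h_1$ and its head is the vertex of $h_2$. A trail is a sequence of arcs whose edges are pairwise distinct and such that the head of each arc (other than the last) is the tail of the next. Its tail and head are the tail of its first arc and the head of its last arc. A circuit is a trail whose head equals its tail. A circuit hits $v$ if it contains an arc incident to $v$. A circuit-decomposition of $G$ is a collection of circuits using every edge of $G$ exactly once. A graph is Eulerian if it is connected and every vertex has even degree. A signature is a function $\gamma:E(G)\to\mathbb{Z}_2$. The weight of a trail is the $\mathbb{Z}_2$-sum of $\gamma$ over its edges, and a trail is zero or non-zero accordingly. An RES-graph is a triple $(G,\gamma,b)$ where $G$ is an Eulerian graph, $\gamma$ is a signature of $G$, and $b\in V(G)$. The flooding number $\tilde{\nu}(G,\gamma,b)$ is the maximum size of a circuit-decomposition in which every circuit is non-zero and hits $b$; it is $0$ if none exists. A flooding of $(G,\gamma,b)$ is a circuit-decomposition of $G$ of size $\deg(b)/2$ in which every circuit has $b$ as its tail and its head. *)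

(* Defs.v *)
From mathcomp Require Import all_boot.
From mathcomp Require Import boolp.

Set Implicit Arguments.
Unset Strict Implicit.
Unset Printing Implicit Defensive.

(* A finite graph with loops and multiple edges:
   vertices V, edges E, and each edge e has two half-edges (e,false),(e,true);
   [ends e d] is the vertex the half-edge (e,d) is incident to.
   An arc is a pair (e,d) : E * bool, i.e. the ordered pair of half-edges
   ((e,d),(e,~~d)); its tail is [ends e d] and its head [ends e (~~ d)].
   A signature is gamma : E -> bool (bool = Z_2, sum = addb). *)

Section RES.
Variables (V E : finType) (ends : E -> bool -> V).

Definition arc := (E * bool)%type.
Definition arc_tail (a : arc) : V := ends a.1 a.2.
Definition arc_head (a : arc) : V := ends a.1 (~~ a.2).

(* degree: number of half-edges incident to v (a loop contributes 2) *)
Definition deg (v : V) : nat := #|[set h : E * bool | ends h.1 h.2 == v]|.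

Definition adj : rel V :=
  fun u v => [exists e : E, [exists d : bool, (ends e d == u) && (ends e (~~ d) == v)]].

Definition connected_graph : Prop := forall u v : V, connect adj u v.

Definition eulerian : Prop := connected_graph /\ forall v : V, ~~ odd (deg v).

Definition trail (t : seq arc) : bool :=
  match t with
  | [::] => false
  | a :: s => path (fun x y => arc_head x == arc_tail y) a s && uniq (map fst t)
  end.

Definition circuit (t : seq arc) : bool :=
  match t with
  | [::] => false
  | a :: s => trail t && (arc_head (last a s) == arc_tail a)
  end.

Definition tail_is (v : V) (t : seq arc) : bool :=
  match t with
  | [::] => false
  | a :: _ => arc_tail a == v
  end.

Definition hits (v : V) (t : seq arc) : bool :=
  has (fun a => (arc_tail a == v) || (arc_head a == v)) t.

Definition weight (gamma : E -> bool) (t : seq arc) : bool :=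
  foldr (fun a acc => gamma a.1 (+) acc) false t.

Definition nonzero (gamma : E -> bool) (t : seq arc) : bool := weight gamma t.

Definition circuit_decomposition (D : seq (seq arc)) : Prop :=
  all circuit D /\
  forall e : E, count (pred1 e) (flatten (map (map fst) D)) = 1.

(* flooding number: max size of a circuit-decomposition all of whose circuits
   are non-zero and hit b; 0 if none exists.  Every circuit is nonempty with
   pairwise distinct edges, so such sizes are bounded by #|E|. *)
Definition flooding_number (gamma : E -> bool) (b : V) : nat :=
  \max_(k < #|E|.+1 | `[< exists D : seq (seq arc),
        [/\ circuit_decomposition D, all (nonzero gamma) D,
            all (hits b) D & size D = k] >]) k.

Definition flooding (b : V) (D : seq (seq arc)) : Prop :=
  [/\ circuit_decomposition D, size D = (deg b)./2 & all (tail_is b) D].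

End RES.

(* Main.v *)
Require Import Defs.
From mathcomp Require Import all_boot boolp.

Set Implicit Arguments.
Unset Strict Implicit.
Unset Printing Implicit Defensive.

Section Res.
Variables (V E : finType) (ends : E -> bool -> V) (b : V) (gamma : E -> bool).

Local Notation tl := (arc_tail ends).
Local Notation hd := (arc_head ends).
Local Notation A := (E * bool)%type.

Definition rr : rel A := fun x y => hd x == tl y.

Definition cwb (s : seq A) : bool :=
  if s is a :: s' then [&& tl a == b, path rr a s' & hd (last a s') == b] else false.

Definition lasthd (s : seq A) : bool :=
  if s is a :: s' then hd (last a s') == b else true.

Lemma lasthd_cons a s : lasthd (a :: s) -> lasthd s.
Proof. by case: s. Qed.

Lemma cwb_lasthd s : cwb s -> lasthd s.
Proof. by case: s => //= a s /and3P[]. Qed.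

Lemma tails_heads a s : path rr a s -> map tl s = map hd (belast a s).
Proof.
elim: s a => [|y s IH] a //= /andP[/eqP-> Hp]; by rewrite (IH y Hp).
Qed.

Lemma cyc_perm a s : path rr a s -> hd (last a s) = tl a ->
  perm_eq (map tl (a :: s)) (map hd (a :: s)).
Proof.
move=> Hp Hl.
have -> : map hd (a :: s) = rcons (map hd (belast a s)) (hd (last a s)) by rewrite lastI map_rcons.
rewrite /= (tails_heads Hp) -Hl.
by rewrite perm_sym perm_rcons.
Qed.

Lemma cwb_cat p q : cwb p -> cwb q -> cwb (p ++ q).
Proof.
case: p => // a p; case: q => // c q /= /and3P[Ha Hp Hl] /and3P[Hc Hq Hl'].
rewrite Ha cat_path Hp last_cat /= Hq Hl' /rr /=.
by rewrite (eqP Hl) (eqP Hc) eqxx.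
Qed.

Lemma weightE t : weight gamma t = odd (count (fun a : A => gamma a.1) t).
Proof. by elim: t => //= a t ->; rewrite oddD oddb. Qed.

Fixpoint splitb (s : seq A) : seq (seq A) :=
  match s with
  | [::] => [::]
  | a :: s' => if hd a == b then [:: a] :: splitb s'
               else match splitb s' with
                    | [::] => [:: [:: a]]
                    | p :: ps => (a :: p) :: ps
                    end
  end.

Lemma splitb_cons a s : splitb (a :: s) = if hd a == b then [:: a] :: splitb s
   else match splitb s with [::] => [:: [:: a]] | p :: ps => (a :: p) :: ps end.
Proof. by []. Qed.

Lemma flatten_splitb s : flatten (splitb s) = s.
Proof.
elim: s => //= a s IH; case: ifP => _ /=; first by rewrite IH.
by move: IH; case: (splitb s) => [|p ps] /= <-.
Qed.

Lemma splitb_nil s : (splitb s == [::]) = (s == [::]).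
Proof.
apply/eqP/eqP => [H|-> //]; by rewrite -(flatten_splitb s) H.
Qed.

Lemma splitb_cat p q : lasthd p -> splitb (p ++ q) = splitb p ++ splitb q.
Proof.
elim: p => // a p IH Hl /=.
case: p IH Hl => [|c p] IH Hl.
  by rewrite /= in Hl; rewrite Hl.
rewrite IH //; case: ifP => // _.
have : splitb (c :: p) != [::] by rewrite splitb_nil.
by case: (splitb (c :: p)).
Qed.

Lemma size_splitb s : lasthd s -> size (splitb s) = count (fun a => hd a == b) s.
Proof.
elim: s => // a s IH Hl /=.
have Hs := IH (lasthd_cons Hl).
case: ifP => Ha /=; first by rewrite Hs.
case: s IH Hl Hs => [|c s] IH Hl Hs; first by rewrite /= Ha in Hl.
have : splitb (c :: s) != [::] by rewrite splitb_nil.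
by case: (splitb (c :: s)) Hs => // p ps Hs _ /=; rewrite Hs.
Qed.

Lemma splitb_aux a s : path rr a s -> hd (last a s) == b ->
  exists p ps, [/\ splitb (a :: s) = (a :: p) :: ps, path rr a p,
                   hd (last a p) == b & all cwb ps].
Proof.
elim: s a => [|c s IH] a.
  by move=> _ Hb; exists [::], [::]; rewrite /= Hb.
move=> /andP[Hac Hp] Hl; have [p [ps [E1 Hp1 Hl1 Hps]]] := IH c Hp Hl.
rewrite splitb_cons E1; case: ifP => Ha.
  exists [::], ((c :: p) :: ps); split => //=.
  by rewrite Hps Hp1 Hl1 -(eqP Hac) Ha.
by exists (c :: p), ps; split => //=; rewrite Hac Hp1.
Qed.

Lemma splitb_cwb s : cwb s -> all cwb (splitb s).
Proof.
case: s => // a s /and3P[Ht Hp Hl].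
have [p [ps [-> Hp1 Hl1 Hps]]] := splitb_aux Hp Hl.
by rewrite /= Ht Hp1 Hl1 Hps.
Qed.

Lemma cwb_circuit p : cwb p -> uniq (map fst p) -> circuit ends p && tail_is ends b p.
Proof.
case: p => // a p /and3P[Ht Hp Hl] Hu.
by rewrite /circuit /trail /tail_is Hp Hu (eqP Hl) (eqP Ht) eqxx.
Qed.

Lemma uniq_flatten_in (T : eqType) (L : seq (seq T)) p :
  uniq (flatten L) -> p \in L -> uniq p.
Proof.
elim: L => //= q L IH; rewrite cat_uniq in_cons => /and3P[Hq _ HL] /orP[/eqP->|] //.
exact: IH.
Qed.

Lemma sum_bool (T : Type) (P : pred T) s : \sum_(x <- s) (P x : nat) = count P s.
Proof. by elim: s => [|x s IH]; rewrite ?big_nil ?big_cons //= IH. Qed.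

Lemma deg_sum v : deg ends v = \sum_(e : E) ((ends e true == v) + (ends e false == v)).
Proof.
rewrite /deg cardsE -sum1_card big_mkcond /=.
rewrite -(pair_bigA _ (fun e d => if ends e d == v then 1 else 0)) /=.
apply: eq_bigr => e _; rewrite big_bool /=.
by case: ifP; case: ifP.
Qed.

Definition tourc (W : seq A) := forall e : E, count_mem e (map fst W) = 1.

Lemma tour_perm W : tourc W -> perm_eq (map fst W) (index_enum E).
Proof.
move=> H; rewrite /perm_eq; apply/allP => x _ /=.
by rewrite H count_uniq_mem ?index_enum_uniq ?mem_index_enum.
Qed.

Lemma deg_tour W : tourc W ->
  deg ends b = count (fun a => tl a == b) W + count (fun a => hd a == b) W.
Proof.
move=> H; rewrite deg_sum -(perm_big _ (tour_perm H)) big_map.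
rewrite -!sum_bool -big_split; apply: eq_bigr => [[e d]] _.
by case: d; rewrite /arc_tail /arc_head /= // addnC.
Qed.

Lemma cnt_tl_hd W : (W == [::]) || cwb W ->
  count (fun a => tl a == b) W = count (fun a => hd a == b) W.
Proof.
case: W => // a s /= /and3P[Ht Hp Hl].
have := permP (cyc_perm Hp (etrans (eqP Hl) (esym (eqP Ht)))) (pred1 b).
by rewrite !count_map.
Qed.

Lemma tour_flooding W : ((W == [::]) || cwb W) -> tourc W -> flooding ends b (splitb W).
Proof.
move=> Hw Ht.
have Hall : all cwb (splitb W).
  by case/orP: Hw => [/eqP-> //|]; exact: splitb_cwb.
have Hu : uniq (map fst W) by rewrite (perm_uniq (tour_perm Ht)) index_enum_uniq.
have Hpc : forall p, p \in splitb W -> circuit ends p && tail_is ends b p.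
  move=> p Hp; apply: cwb_circuit; first exact: (allP Hall).
  apply: (@uniq_flatten_in _ (map (map fst) (splitb W))).
    by rewrite -map_flatten flatten_splitb.
  exact: map_f.
split.
- split.
    by apply/allP => p /Hpc /andP[].
  by move=> e; rewrite -map_flatten flatten_splitb.
- rewrite size_splitb; last by case/orP: Hw => [/eqP-> //|]; exact: cwb_lasthd.
  by rewrite (deg_tour Ht) (cnt_tl_hd Hw) addnn doubleK.
- by apply/allP => p /Hpc /andP[].
Qed.

Local Notation nz := (nonzero gamma).

Fixpoint merge (L : seq (seq A)) : seq (seq A) :=
  match L with
  | [::] => [::]
  | p :: ps => match merge ps with
               | [::] => [:: p]
               | q :: rs => if nz q && nz p then p :: q :: rs else (p ++ q) :: rs
               end
  end.

Lemma nz_cat p q : nz (p ++ q) = nz p (+) nz q.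
Proof. by rewrite /nonzero !weightE count_cat oddD. Qed.

Lemma flatten_merge L : flatten (merge L) = flatten L.
Proof.
elim: L => //= p L; case: (merge L) => [|q rs] /= <-; first by rewrite cats0.
by case: ifP => //=; rewrite catA.
Qed.

Lemma merge_head L : nz (head [::] (merge L)) = has nz L.
Proof.
elim: L => //= p L; case: (merge L) => [|q rs] /= IH.
  by rewrite -IH orbF.
rewrite -IH; case Hq: (nz q); case Hpp: (nz p) => //=; by rewrite nz_cat Hq Hpp.
Qed.

Lemma merge_behead L : all nz (behead (merge L)).
Proof.
elim: L => //= p L; case: (merge L) => [|q rs] //= IH.
by case: ifP => [/andP[Hq _]|] //=; rewrite Hq.
Qed.

Lemma merge_all L : has nz L -> all nz (merge L).
Proof.
move=> H; have := merge_head L; have := merge_behead L.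
rewrite H; by case: (merge L) => //= q rs -> ->.
Qed.

Lemma merge_size L : count nz L <= size (merge L).
Proof.
elim: L => //= p L; have Hh := merge_head L.
case: (merge L) Hh => [|q rs] /= Hh IH.
  by move: IH; rewrite leqn0 => /eqP->; case: (nz p).
case: ifP => [/andP[_ ->]|] /=; first by rewrite add1n ltnS.
case Hp: (nz p) => //= Hq; rewrite add1n.
have -> : count nz L = 0 by apply/eqP; rewrite -leqn0 leqNgt -has_count -Hh; move: Hq; rewrite andbT => ->.
by [].
Qed.

Lemma merge_cwb L : all cwb L -> all cwb (merge L).
Proof.
elim: L => //= p L IH /andP[Hp HL]; move: (IH HL); case: (merge L) => [|q rs] /=.
  by rewrite Hp.
case/andP=> Hq Hrs; case: ifP => _ /=; first by rewrite Hp Hq Hrs.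
by rewrite cwb_cat.
Qed.

Lemma tour_uniq W : tourc W -> uniq (map fst W).
Proof. by move=> Ht; rewrite (perm_uniq (tour_perm Ht)) index_enum_uniq. Qed.

Lemma cwb_decomp D : all cwb D -> tourc (flatten D) ->
  circuit_decomposition ends D /\ all (hits ends b) D.
Proof.
move=> Hall Ht.
have Hpc : forall p, p \in D -> circuit ends p && tail_is ends b p.
  move=> p Hp; apply: cwb_circuit; first exact: (allP Hall).
  apply: (@uniq_flatten_in _ (map (map fst) D)).
    by rewrite -map_flatten; exact: tour_uniq.
  exact: map_f.
split; first split.
- by apply/allP => p /Hpc /andP[].
- by move=> e; rewrite -map_flatten.
apply/allP => p /Hpc /andP[_]; case: p => //= a p ->; done.
Qed.

Lemma size_le_card D : all cwb D -> tourc (flatten D) -> size D <= #|E|.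
Proof.
move=> Hall Ht; apply: (@leq_trans (size (map fst (flatten D)))).
  rewrite size_map; elim: D Hall {Ht} => //= p D IH /andP[Hp HD].
  rewrite size_cat; case: p Hp => // a p _ /=.
  by rewrite addSn ltnS (leq_trans (IH HD)) // leq_addl.
by rewrite -(card_uniqP (tour_uniq Ht)) max_card.
Qed.

Lemma fn_ge D : all cwb D -> tourc (flatten D) -> all nz D ->
  size D <= flooding_number ends gamma b.
Proof.
move=> Hall Ht Hnz; have [Hd Hh] := cwb_decomp Hall Ht.
have Hs : size D < #|E|.+1 by rewrite ltnS size_le_card.
rewrite /flooding_number; apply: (@bigmax_sup _ (Ordinal Hs)) => //=.
by apply: asboolT; exists D; split.
Qed.

Lemma flooding_cwb F : flooding ends b F -> all cwb F.
Proof.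
case=> [[Hc _] _ Ht]; apply/allP => p Hp.
move: (allP Hc p Hp) (allP Ht p Hp); case: p {Hp} => // a p.
by rewrite /circuit /trail /tail_is /= => /andP[/andP[Hpp _] Hl] Hb; rewrite Hb Hpp -(eqP Hb).
Qed.

Lemma upper F : flooding ends b F -> count nz F <= flooding_number ends gamma b.
Proof.
move=> Hf; case Hh: (has nz F); last by move: Hh; rewrite has_count; case: (count nz F).
have Hall := flooding_cwb Hf.
have Ht : tourc (flatten (merge F)).
  by case: Hf => [[_ Hc] _ _] e; rewrite flatten_merge map_flatten.
apply: (leq_trans (merge_size F)); apply: fn_ge => //.
  exact: merge_cwb.
exact: merge_all.
Qed.

Definition rotb (C : seq A) := rot (find (fun a => tl a == b) C) C.

Lemma rotb_count C (P : pred A) : count P (rotb C) = count P C.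
Proof. by apply/permP; rewrite perm_rot. Qed.

Lemma rotb_cwb C : circuit ends C -> hits ends b C -> cwb (rotb C).
Proof.
case: C => // a s Hc Hh.
move: Hc; rewrite /circuit /trail => /andP[/andP[Hp _] Hl].
have Hperm := cyc_perm Hp (eqP Hl).
have Hcyc : cycle rr (a :: s) by rewrite /= rcons_path Hp.
have Htl : has (fun x => tl x == b) (a :: s).
  case/hasP: Hh => x Hx /orP[Hx1|Hx1]; apply/hasP; first by exists x.
  have : b \in map hd (a :: s) by rewrite -(eqP Hx1) map_f.
  by rewrite -(perm_mem Hperm) => /mapP[y Hy ->]; exists y.
have Hi := Htl; rewrite has_find in Hi.
have Hn := nth_find a Htl.
move: Hi Hn Hcyc; rewrite /rotb.
set C := a :: s; set i := find _ C => Hi Hn Hcyc.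
have Er : rot i C = nth a C i :: (drop i.+1 C ++ take i C) by rewrite /rot (drop_nth a Hi).
rewrite -(rot_cycle i) Er in Hcyc; rewrite Er.
move: Hn Hcyc; move: (nth a C i) (drop i.+1 C ++ take i C) => c t Hn.
rewrite /cycle rcons_path => /andP[Ht Hlt].
by rewrite /cwb Hn Ht -(eqP Hn).

Qed.

Lemma cwb_flatten L : all cwb L -> (flatten L == [::]) || cwb (flatten L).
Proof.
elim: L => //= p L IH /andP[Hp /IH]; case/orP => [/eqP->|H]; first by rewrite cats0 Hp orbT.
by rewrite cwb_cat ?orbT.
Qed.

Lemma tour_rot D : circuit_decomposition ends D -> tourc (flatten (map rotb D)).
Proof.
case=> _ Hd e; move: (Hd e).
rewrite map_flatten !count_flatten -!map_comp => <-.
congr sumn; apply: eq_map => C /=.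
by rewrite /rotb map_rot; apply/permP; rewrite perm_rot.
Qed.

Lemma splitb_flatten L : all cwb L -> splitb (flatten L) = flatten (map splitb L).
Proof.
elim: L => //= p L IH /andP[Hp HL].
by rewrite splitb_cat ?IH // cwb_lasthd.
Qed.

Lemma not_nz_flatten L : ~~ has nz L -> ~~ nz (flatten L).
Proof.
elim: L => //= p L IH; rewrite negb_or => /andP[Hp HL].
by rewrite nz_cat (negbTE Hp) (negbTE (IH HL)).
Qed.

Lemma has_nz_split s : nz s -> has nz (splitb s).
Proof.
move=> Hs; apply/negPn/negP => /not_nz_flatten.
by rewrite flatten_splitb Hs.
Qed.

Lemma count_split L : all cwb L -> all nz L -> size L <= count nz (splitb (flatten L)).
Proof.
move=> Hc Hn; rewrite splitb_flatten // count_flatten -map_comp.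
elim: L Hc Hn => //= p L IH /andP[_ Hc] /andP[Hp Hn].
by rewrite -add1n; apply: leq_add; [rewrite -has_count; exact: has_nz_split | exact: IH].
Qed.

Lemma lower D : circuit_decomposition ends D -> all nz D -> all (hits ends b) D ->
  exists W, [/\ (W == [::]) || cwb W, tourc W & size D <= count nz (splitb W)].
Proof.
move=> Hd Hn Hh.
have Hc : all cwb (map rotb D).
  apply/allP => x /mapP[C HC ->]; apply: rotb_cwb; [exact: (allP Hd.1) | exact: (allP Hh)].
exists (flatten (map rotb D)); split.
- exact: cwb_flatten.
- exact: tour_rot.
rewrite -(size_map rotb); apply: count_split => //.
apply/allP => x /mapP[C HC ->].
by rewrite /nonzero weightE rotb_count -weightE; exact: (allP Hn).
Qed.

Definition trl (T : seq A) := [&& T != [::], sorted rr T & uniq (map fst T)].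

Lemma trl_size T : trl T -> size T <= #|E|.
Proof. by case/and3P => _ _ Hu; rewrite -(size_map fst) -(card_uniqP Hu) max_card. Qed.

Lemma trl_rcons T x e d : trl T -> e \notin map fst T -> ends e d = hd (last x T) ->
  trl (rcons T (e, d)).
Proof.
case: T => // a s /and3P[_ Hp Hu] He Hd; move: Hp => /= Hp.
rewrite /trl /= rcons_path Hp /rr /arc_tail /= Hd eqxx /=.
have -> : [seq i.1 | i <- rcons s (e, d)] = rcons (map fst s) e by rewrite map_rcons.
move: Hu He => /= /andP[Ha Hu]; rewrite inE negb_or => /andP[Hea He].
by rewrite rcons_uniq mem_rcons inE negb_or eq_sym Hea Ha He Hu.
Qed.

Lemma sum_arcs u T : \sum_(x <- T) ((ends x.1 true == u) + (ends x.1 false == u))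
  = count (fun x => tl x == u) T + count (fun x => hd x == u) T.
Proof.
rewrite -!sum_bool -big_split; apply: eq_bigr => [[e d]] _.
by case: d; rewrite /arc_tail /arc_head /= // addnC.
Qed.

Lemma euler : eulerian ends -> exists W, ((W == [::]) || cwb W) /\ tourc W.
Proof.
case=> Hconn Heven.
case: (pickP (@predT E)) => [e0 _|E0]; last first.
  by exists [::]; split => // e; move: (E0 e).
pose P := fun n => `[< exists T, trl T /\ size T = n >].
have exP : exists n, P n by exists 1; apply/asboolP; exists [:: (e0,false)].
have ubP : forall n, P n -> n <= #|E| by move=> n /asboolP[T [HT <-]]; exact: trl_size.
case: (ex_maxnP exP ubP) => n /asboolP[T [HT Hsz]] Hmax.
have Hmax' : forall T', trl T' -> size T' <= n.
  by move=> T' HT'; apply: Hmax; apply/asboolP; exists T'.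
case: T HT Hsz => // a s HT Hsz.
have Hp : path rr a s by case/and3P: HT.
have Hu : uniq (map fst (a :: s)) by case/and3P: HT.
have Hcl : hd (last a s) = tl a.
  apply/eqP/negPn/negP => Hne.
  set u := hd (last a s) in Hne.
  suff [e [d [He Hd]]] : exists e d, e \notin map fst (a :: s) /\ ends e d = u.
    by have := Hmax' _ (trl_rcons (x:=a) HT He Hd); rewrite size_rcons Hsz ltnn.
  have Hsum := Heven u; rewrite deg_sum in Hsum.
  have Hsplit : \sum_e ((ends e true == u) + (ends e false == u)) =
      \sum_(e in map fst (a :: s)) ((ends e true == u) + (ends e false == u)) +
      \sum_(e | e \notin map fst (a :: s)) ((ends e true == u) + (ends e false == u)).
    by rewrite (bigID (fun e => e \in map fst (a :: s))); congr (_ + _); apply: eq_bigl.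
  rewrite Hsplit in Hsum.
  have H1 : \sum_(e | e \in map fst (a :: s)) ((ends e true == u) + (ends e false == u))
       = count (fun x => tl x == u) (a :: s) + count (fun x => hd x == u) (a :: s).
    by rewrite -big_uniq // big_map sum_arcs.
  have Hodd : odd (count (fun x => tl x == u) (a :: s) + count (fun x => hd x == u) (a :: s)).
    have -> : count (fun x => tl x == u) (a :: s) = count (pred1 u) (map tl (a :: s)) by rewrite count_map.
    have -> : count (fun x => hd x == u) (a :: s) = count (pred1 u) (map hd (a :: s)) by rewrite count_map.
    have -> : map hd (a :: s) = rcons (map hd (belast a s)) u by rewrite lastI map_rcons.
    rewrite /= (tails_heads Hp) -cats1 count_cat /= eqxx.
    rewrite eq_sym (negbTE Hne) /=.
    set c := count_mem u _; rewrite add0n addnA addnn addn1 /=.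
    by rewrite odd_double.
  rewrite H1 oddD Hodd /= in Hsum.
  case: (boolP [exists e, (e \notin map fst (a :: s)) && ((ends e true == u) || (ends e false == u))]).
    case/existsP => e /andP[He /orP[] /eqP Hd]; [by exists e, true | by exists e, false].
  move/existsPn => Hno; move: Hsum; rewrite big1 // => e He.
  by move: (Hno e); rewrite He /=; case: (ends e true == u); case: (ends e false == u).
set C := a :: s in Hu HT Hsz *.
have Hperm := cyc_perm Hp Hcl.
have Hcyc : cycle rr C by rewrite /C /= rcons_path Hp /rr Hcl eqxx.
pose S := [pred v | has (fun x => tl x == v) C].
have HS_arc : forall x, x \in C -> forall dd, ends x.1 dd \in S.
  move=> [e d] Hx dd; case: (boolP (dd == d)) => [/eqP Edd|Edd].
    by rewrite Edd inE; apply/hasP; exists (e, d).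
  have -> : dd = ~~ d by move: Edd {Hx}; case: dd; case: d.
  have : hd (e, d) \in map tl C by rewrite (perm_mem Hperm) map_f.
  by case/mapP => y Hy Hyy; rewrite inE; apply/hasP; exists y => //; rewrite -Hyy.
have HC : forall f dd, f \notin map fst C -> ends f dd \notin S.
  move=> f dd Hf; apply/negP; rewrite inE => Htl.
  have Hi := Htl; rewrite has_find in Hi.
  have Hn := nth_find a Htl.
  move: Hi Hn; set i := find _ C => Hi Hn.
  have Er : rot i C = nth a C i :: (drop i.+1 C ++ take i C) by rewrite /rot (drop_nth a Hi).
  have Hc' := Hcyc; rewrite -(rot_cycle i) Er in Hc'.
  have Hu' : uniq (map fst (rot i C)) by rewrite map_rot rot_uniq.
  have Hf' : f \notin map fst (rot i C) by rewrite map_rot mem_rot.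
  have Hsz' : size (rot i C) = n by rewrite size_rot.
  rewrite Er in Hu' Hf' Hsz'.
  move: Hn Hc' Hu' Hf' Hsz'; move: (nth a C i) (drop i.+1 C ++ take i C) => c t Hn.
  rewrite /cycle rcons_path => /andP[Ht Hlt] Hu' Hf' Hsz'.
  have Htr : trl (c :: t) by apply/and3P; split.
  have Hd : ends f dd = hd (last c (c :: t)) by rewrite (eqP Hlt) (eqP Hn).
  by have := Hmax' _ (trl_rcons Htr Hf' Hd); rewrite size_rcons Hsz' ltnn.
have Hclosed : closed (adj ends) S.
  move=> x y /existsP[e /existsP[d /andP[/eqP Hx /eqP Hy]]].
  case: (boolP (e \in map fst C)) => He.
    case/mapP: He => z Hz Hez.
    by rewrite -Hx -Hy Hez !HS_arc.
  by rewrite -Hx -Hy (negbTE (HC _ _ He)) (negbTE (HC _ _ He)).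
have Hall : forall v, v \in S.
  move=> v; rewrite -(closed_connect Hclosed (Hconn (tl a) v)).
  by rewrite inE; apply/hasP; exists a; rewrite ?mem_head.
have Hedges : forall e, e \in map fst C.
  by move=> e; apply/negPn/negP => He; have := HC e false He; rewrite Hall.
exists (rotb C); split.
  apply/orP; right; apply: rotb_cwb.
    by rewrite /C /circuit /trail Hp Hu Hcl eqxx.
  by apply: (sub_has _ (Hall b)) => x ->.
move=> e; rewrite /rotb map_rot.
have -> : count_mem e (rot (find (fun a0 => tl a0 == b) C) (map fst C)) = count_mem e (map fst C).
  by apply/permP; rewrite perm_rot.
by rewrite count_uniq_mem // Hedges.
Qed.

End Res.

Lemma bigmax_att n (P : pred 'I_n) :
  \max_(k | P k) (k : nat) = 0 \/ exists2 k : 'I_n, P k & \max_(k | P k) (k : nat) = k.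
Proof.
case: (pickP P) => [k Pk|P0]; [right | left; exact: big_pred0].
exists [arg max_(i > k | P i) (i : nat)]; first by case: arg_maxnP.
exact: bigmax_eq_arg.
Qed.

Theorem mainTheorem3 (V E : finType) (ends : E -> bool -> V)
    (gamma : E -> bool) (b : V) :
  eulerian ends ->
  (exists F : seq (seq (E * bool)), flooding ends b F /\
      count (nonzero gamma) F = flooding_number ends gamma b) /\
  (forall F : seq (seq (E * bool)), flooding ends b F ->
      count (nonzero gamma) F <= flooding_number ends gamma b).
Proof.
move=> Heul.
have Hup := @upper V E ends b gamma.
split; last exact: Hup.
have [H0|[k Pk Hk]] := bigmax_att (fun k : 'I_#|E|.+1 => `[< exists D : seq (seq (E * bool)),
    [/\ circuit_decomposition ends D, all (nonzero gamma) D, all (hits ends b) D & size D = k] >]).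
  have [W [Hw Ht]] := euler b Heul.
  exists (splitb ends b W); have Hf := tour_flooding Hw Ht; split => //.
  have Hfn : flooding_number ends gamma b = 0 by rewrite /flooding_number H0.
  by apply/eqP; rewrite Hfn -leqn0 -Hfn Hup.
have Hfn : flooding_number ends gamma b = k by rewrite /flooding_number Hk.
case/asboolP: Pk => D [Hd Hn Hh Hs].
have [W [Hw Ht Hc]] := lower Hd Hn Hh.
exists (splitb ends b W); have Hf := tour_flooding Hw Ht; split => //.
by apply/eqP; rewrite eqn_leq Hup // Hfn -Hs Hc.
Qed.
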